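(* Let $\mathbf{P}=(X,P)$ be a dually-CPT poset whose comparability graph is connected. Then the quotient poset $\mathbf{P}/\mathcal{M}(\mathbf{P})$ is dually-CPT and every maximal strong module of $\mathbf{P}$ induces a CI poset. In particular, if the quotient poset is CI, then $\mathbf{P}$ is CI.
   Context: A poset $\mathbf{P}$ is CPT if there is a tree $T$ and paths $W_x$ of $T$ ($x\in X$) with $x<y$ iff $W_x\subsetneq W_y$; it is CI if this can be done with $T$ a path (containment order of intervals). $\mathbf{P}$ is dually-CPT if $\mathbf{P}$ and its dual $\mathbf{P}^d$ are both CPT. A set $M\subseteq X$ is a module if every $y\in X\setminus M$ is either comparable to all elements of $M$ or incomparable to all elements of $M$. A module $M$ is strong if for every module $M'$, either $M\cap M'=\emptyset$, $M\subseteq M'$ or $M'\subseteq M$. The maximal strong modules (strong modules $M\ne X$ maximal under inclusion) partition $X$; this partition is $\mathcal{M}(\mathbf{P})=\{M_1,\dots,M_k\}$. The quotient poset $\mathbf{P}/\mathcal{M}(\mathbf{P})$ has one vertex $v_i$ per part $M_i$, with $v_i,v_j$ ordered as any (equivalently every) $x\in M_i$, $y\in M_j$ are ordered in $\mathbf{P}$ (it is isomorphic to the subposet of $\mathbf{P}$ induced by one representative of each part). A module ''is CI'' means the induced subposet is CI. *)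

(* Defs.v *)
(* Finite posets are given as a strict order relation
   [lt : rel X] on a finite type [X]. *)
From mathcomp Require Import all_boot.
Set Implicit Arguments. Unset Strict Implicit. Unset Printing Implicit Defensive.

Definition is_poset (X : finType) (lt : rel X) : Prop :=
  irreflexive lt /\ transitive lt.

Definition dual_rel (X : finType) (lt : rel X) : rel X := fun x y => lt y x.

Definition comparable (X : finType) (lt : rel X) : rel X :=
  fun x y => lt x y || lt y x.

Definition comp_connected (X : finType) (lt : rel X) : Prop :=
  forall x y : X, connect (comparable lt) x y.

Definition is_tree (V : finType) (e : rel V) : Prop :=
  [/\ symmetric e, irreflexive e,
      (forall u v : V, connect e u v) &
      (forall c : seq V, uniq c -> 3 <= size c -> ~~ cycle e c)].

Definition is_graph_path (V : finType) (e : rel V) (W : {set V}) : Prop :=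
  exists (v : V) (s : seq V),
    [/\ path e v s, uniq (v :: s) & W = [set x in v :: s]].

Definition path_rep (X V : finType) (lt : rel X) (e : rel V)
    (W : X -> {set V}) : Prop :=
  (forall x, is_graph_path e (W x)) /\
  (forall x y, lt x y = (W x \proper W y)).

Definition CPT (X : finType) (lt : rel X) : Prop :=
  exists (V : finType) (e : rel V) (W : X -> {set V}),
    is_tree e /\ path_rep lt e W.

(* CI: containment of intervals, i.e. paths in a tree which is itself a path
   (a tree of maximum degree at most 2) *)
Definition CI (X : finType) (lt : rel X) : Prop :=
  exists (V : finType) (e : rel V) (W : X -> {set V}),
    [/\ is_tree e, (forall v : V, #|[set w | e v w]| <= 2) & path_rep lt e W].

Definition dually_CPT (X : finType) (lt : rel X) : Prop :=
  CPT lt /\ CPT (dual_rel lt).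

(* modules (nonempty by convention); boolean since everything is finite *)
Definition is_module (X : finType) (lt : rel X) (M : {set X}) : bool :=
  (M != set0) &&
  [forall y in ~: M,
    [forall m in M, comparable lt y m] || [forall m in M, ~~ comparable lt y m]].

Definition strong_module (X : finType) (lt : rel X) (M : {set X}) : bool :=
  is_module lt M &&
  [forall M' : {set X}, is_module lt M' ==>
    [|| M :&: M' == set0, M \subset M' | M' \subset M]].

Definition max_strong_module (X : finType) (lt : rel X) (M : {set X}) : bool :=
  [&& strong_module lt M, M != setT &
      [forall M' : {set X},
         (strong_module lt M' && (M' != setT) && (M \subset M')) ==> (M' == M)]].

Definition msm (X : finType) (lt : rel X) : {set {set X}} :=
  [set M | max_strong_module lt M].

Definition sub_rel (X : finType) (lt : rel X) (M : {set X}) :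
    rel {x : X | x \in M} :=
  fun a b => lt (val a) (val b).

Definition quot_lt (X : finType) (lt : rel X) :
    rel {M : {set X} | M \in msm lt} :=
  fun A B => [forall x in val A, forall y in val B, lt x y].

Arguments quot_lt {X} lt.
Arguments sub_rel {X} lt M.
Arguments msm {X} lt.

(* Main.v *)
Require Import Defs.
From mathcomp Require Import all_boot zify.
Set Implicit Arguments. Unset Strict Implicit. Unset Printing Implicit Defensive.


Lemma cross_conn (T : finType) (e : rel T) (S : {set T}) x y :
  connect e x y -> x \in S -> y \notin S ->
  exists a b, [/\ a \in S, b \notin S, e a b & connect e x a].
Proof.
move=> /connectP [p]; elim: p x => [|z p IH] x /=; first by move=> _ -> ->.
move=> /andP [exz pz] ey xS yS.
case zS: (z \in S).
  have [a [b [aS bS eab cza]]] := IH z pz ey zS yS.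
  exists a, b; split=> //; apply: connect_trans cza; exact: connect1.
by exists x, z; rewrite zS; split.
Qed.

Section Modules.
Variables (X : finType) (lt : rel X).
Hypothesis (irr : irreflexive lt) (trans : transitive lt).
Hypothesis conn : comp_connected lt.

Local Notation cmp := (Defs.comparable lt).
Definition ninc : rel X := fun a b => (a != b) && ~~ cmp a b.

Lemma cmpC : symmetric cmp.
Proof. by move=> a b; rewrite /Defs.comparable orbC. Qed.

Lemma nincC : symmetric ninc.
Proof. by move=> a b; rewrite /ninc eq_sym cmpC. Qed.

Lemma module_uni M y m1 m2 : is_module lt M -> y \notin M -> m1 \in M -> m2 \in M ->
  cmp y m1 -> cmp y m2.
Proof.
case/andP=> _ /forall_inP H yM m1M m2M c1.
have := H y; rewrite in_setC => /(_ yM) /orP [/forall_inP A|/forall_inP B].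
  exact: A.
by move: (B _ m1M); rewrite c1.
Qed.

Lemma moduleP M : M != set0 ->
  (forall y m1 m2, y \notin M -> m1 \in M -> m2 \in M -> cmp y m1 -> cmp y m2) ->
  is_module lt M.
Proof.
move=> M0 H; rewrite /is_module M0 /=; apply/forall_inP => y; rewrite in_setC => yM.
case: (boolP [exists m in M, cmp y m]) => [/exists_inP [m mM cm]|].
  by apply/orP; left; apply/forall_inP => m' m'M; exact: (H y m).
by rewrite negb_exists_in => ->; rewrite orbT.
Qed.

Lemma strongP M Q : strong_module lt M -> is_module lt Q ->
  [|| M :&: Q == set0, M \subset Q | Q \subset M].
Proof. by case/andP => _ /forallP /(_ Q) /implyP; apply. Qed.

Lemma msm_strong M : M \in msm lt -> strong_module lt M.
Proof. by rewrite inE => /and3P []. Qed.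
Lemma msm_neqT M : M \in msm lt -> M != setT.
Proof. by rewrite inE => /and3P []. Qed.
Lemma msm_module M : M \in msm lt -> is_module lt M.
Proof. by move/msm_strong/andP => []. Qed.
Lemma msm_max M M' : M \in msm lt -> strong_module lt M' -> M' != setT ->
  M \subset M' -> M' = M.
Proof.
rewrite inE => /and3P [_ _ /forallP H] s n sub.
by apply/eqP; move: (H M') => /implyP; apply; rewrite s n sub.
Qed.
Lemma module_n0 M : is_module lt M -> exists m, m \in M.
Proof. by case/andP => /set0Pn. Qed.

Lemma ltW a b : lt a b -> cmp a b. Proof. by rewrite /Defs.comparable => ->. Qed.
Lemma ltW' a b : lt b a -> cmp a b. Proof. by rewrite /Defs.comparable => ->; rewrite orbT. Qed.

Lemma no_split M y a b : M \in msm lt -> y \notin M -> a \in M -> b \in M ->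
  lt a y -> lt y b -> False.
Proof.
move=> Mm yM aM bM ay yb.
have Mmod := msm_module Mm; have Mst := msm_strong Mm; have MT := msm_neqT Mm.
case: (boolP [forall u, forall v, connect ninc u v]) => [/forallP cc|].
-
  pose S := [set s | (s \notin M) && [exists l in M, exists u in M, lt l s && lt s u]].
  have cmpS s m : s \in S -> m \in M -> cmp s m.
    rewrite inE => /andP [sM /exists_inP [l lM /exists_inP [u uM /andP [ls su]]]] mM.
    exact: (module_uni Mmod sM lM mM (ltW' ls)).
  pose K := M :|: S.
  have Kmod : is_module lt K.
    apply: moduleP; first by apply/set0Pn; exists a; rewrite inE aM.
    move=> z k1 k2; rewrite !in_setU negb_or => /andP [zM zS] k1K k2K c1.
    have cM m : m \in M -> cmp z m.
      case/orP: k1K => [k1M|k1S] mM; first exact: (module_uni Mmod zM k1M mM c1).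
      move: (k1S); rewrite inE => /andP [_ /exists_inP [l lM /exists_inP [u uM /andP [ls su]]]].
      case/orP: c1 => c1.
        exact: (module_uni Mmod zM uM mM (ltW (trans c1 su))).
      exact: (module_uni Mmod zM lM mM (ltW' (trans ls c1))).
    have nsp : ~ exists l u, [/\ l \in M, u \in M, lt l z & lt z u].
      move=> [l [u [lM uM lz zu]]]; move: zS; rewrite inE zM /=.
      by move/negP; apply; apply/exists_inP; exists l => //; apply/exists_inP; exists u => //; rewrite lz zu.
    have za : z != a by apply: contraNneq zM => ->.
    have [allb|alla] : (forall m, m \in M -> lt m z) \/ (forall m, m \in M -> lt z m).
      case/orP: (cM a aM) => h.
        right=> m mM; case/orP: (cM m mM) => // h'.
        by case: nsp; exists m, a.
      left=> m mM; case/orP: (cM m mM) => // h'.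
      by case: nsp; exists a, m.
    + case/orP: k2K => [k2M|k2S]; first exact: cM.
      move: (k2S); rewrite inE => /andP [_ /exists_inP [l lM /exists_inP [u uM /andP [ls su]]]].
      exact: ltW' (trans su (allb _ uM)).
    + case/orP: k2K => [k2M|k2S]; first exact: cM.
      move: (k2S); rewrite inE => /andP [_ /exists_inP [l lM /exists_inP [u uM /andP [ls su]]]].
      exact: ltW (trans (alla _ lM) ls).
  have yS : y \in S.
    by rewrite inE yM /=; apply/exists_inP; exists a => //; apply/exists_inP; exists b => //; rewrite ay yb.
  have KT : K != setT.
    apply/negP => /eqP KT.
    have [c [w [cM wM /andP [_ ncw] _]]] := cross_conn (forallP (cc a) y) aM yM.
    have : w \in K by rewrite KT inE.
    rewrite inE (negbTE wM) /= => wS.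
    by move: ncw; rewrite cmpC (cmpS _ _ wS cM).
  pose P := [pred K' : {set X} | [&& is_module lt K', K' != setT & K \subset K']].
  have PK : P K by rewrite /= Kmod KT subxx.
  case: (arg_maxnP (fun K' : {set X} => #|K'|) PK) => K' /and3P [K'mod K'T KK'] K'max.
  have K'st : strong_module lt K'.
    rewrite /strong_module K'mod /=; apply/forallP => Q; apply/implyP => Qmod.
    apply/negPn/negP; rewrite !negb_or => /and3P [IQ nKQ nQK].
    have [c] := set0Pn _ IQ; rewrite inE => /andP [cK cQ].
    have UQmod : is_module lt (K' :|: Q).
      apply: moduleP; first by apply/set0Pn; exists c; rewrite inE cK.
      move=> z k1 k2; rewrite !inE negb_or => /andP [zK zQ] k1K k2K c1.
      have cc' : cmp z c.
        by case/orP: k1K => h; [apply: (module_uni K'mod zK h cK c1)| apply: (module_uni Qmod zQ h cQ c1)].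
      case/orP: k2K => h; [apply: (module_uni K'mod zK cK h cc')| apply: (module_uni Qmod zQ cQ h cc')].
    have UT : K' :|: Q = setT.
      apply/eqP; apply/negPn/negP => UT.
      have PU : P (K' :|: Q) by rewrite /= UQmod UT (subset_trans KK') // subsetUl.
      have := K'max _ PU => le.
      have : K' :|: Q = K'.
        by apply/eqP; rewrite eq_sym eqEcard subsetUl; exact: le.
      by move=> E; move: nQK; rewrite -E subsetUr.
    have [w0] : exists w0, w0 \in K' :\: Q.
      by apply/set0Pn; move: nKQ; rewrite -setD_eq0.
    rewrite inE => /andP [w0Q w0K].
    have [q] : exists q, q \in Q :\: K'.
      by apply/set0Pn; move: nQK; rewrite -setD_eq0.
    rewrite inE => /andP [qK qQ].
    have zQ z : z \notin K' -> z \in Q.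
      move=> zK; have : z \in K' :|: Q by rewrite UT inE.
      by rewrite inE (negbTE zK).
    have bit z k : z \notin K' -> k \in K' -> cmp z k = cmp w0 c.
      move=> zK kK.
      have e1 : cmp z k = cmp z w0.
        apply/idP/idP => h; [exact: (module_uni K'mod zK kK w0K h)|exact: (module_uni K'mod zK w0K kK h)].
      have e2 : cmp w0 z = cmp w0 c.
        apply/idP/idP => h; [exact: (module_uni Qmod w0Q (zQ _ zK) cQ h)|exact: (module_uni Qmod w0Q cQ (zQ _ zK) h)].
      by rewrite e1 cmpC e2.
    case bt: (cmp w0 c).
      have [c' [w [c'K wK /andP [_ ncw] _]]] := cross_conn (forallP (cc c) q) cK qK.
      by move: ncw; rewrite cmpC (bit _ _ wK c'K) bt.
    have [c' [w [c'K wK cw _]]] := cross_conn (conn c q) cK qK.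
    by move: cw; rewrite cmpC (bit _ _ wK c'K) bt.
  have E := msm_max Mm K'st K'T (subset_trans (subsetUl M S) KK').
  have : y \in K' by apply: (subsetP KK'); rewrite inE yS orbT.
  by rewrite E (negbTE yM).
-
  rewrite negb_forall => /existsP [u]; rewrite negb_forall => /existsP [v nuv].
  pose D := [set z | connect ninc a z].
  have aD : a \in D by rewrite inE connect0.
  have cD z d : z \notin D -> d \in D -> cmp z d.
    rewrite !inE => zD dD; have dz : d != z by apply: contraNneq zD => <-.
    apply/negPn/negP => nc; move: zD; rewrite (connect_trans dD) //; apply: connect1.
    by rewrite /ninc dz cmpC.
  have Dc d1 d2 : d1 \in D -> d2 \in D -> connect ninc d1 d2.
    rewrite !inE => h1 h2; apply: connect_trans h2; by rewrite (sym_connect_sym (@nincC)).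
  have Dmod : is_module lt D.
    apply: moduleP; first by apply/set0Pn; exists a.
    by move=> z m1 m2 zD _ m2D _; apply: cD.
  have DT : D != setT.
    apply/negP => /eqP DT; move: nuv; rewrite Dc // DT inE //.
  have Dst : strong_module lt D.
    rewrite /strong_module Dmod /=; apply/forallP => Q; apply/implyP => Qmod.
    apply/negPn/negP; rewrite !negb_or => /and3P [IQ nKQ nQK].
    have [d0] := set0Pn _ IQ; rewrite inE => /andP [d0D d0Q].
    have [d1] : exists d1, d1 \in D :\: Q.
      by apply/set0Pn; move: nKQ; rewrite -setD_eq0.
    rewrite inE => /andP [d1Q d1D].
    have [q] : exists q, q \in Q :\: D.
      by apply/set0Pn; move: nQK; rewrite -setD_eq0.
    rewrite inE => /andP [qD qQ].
    have [c [w [cQ wQ ncw' cc]]] := cross_conn (Dc _ _ d0D d1D) d0Q d1Q.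
    have ncw := (andP ncw').2.
    have wD : w \in D.
      by rewrite inE (connect_trans _ (connect_trans cc (connect1 ncw'))) //; move: d0D; rewrite inE.
    have := cD _ _ qD wD; rewrite cmpC => /(module_uni Qmod wQ qQ cQ).
    by rewrite cmpC (negbTE ncw).
  have MD : M \subset D.
    pose Q := ~: M :|: D.
    have Qmod : is_module lt Q.
      apply: moduleP; first by apply/set0Pn; exists a; rewrite in_setU aD orbT.
      move=> w k1 k2; rewrite !in_setU !in_setC negb_or negbK => /andP [wM wD] _ k2Q _.
      case/orP: k2Q => [k2M|k2D]; last exact: cD.
      case k2D: (k2 \in D); first exact: cD.
      rewrite cmpC; apply: (module_uni Mmod k2M aM wM).
      by apply: cD => //; rewrite k2D.
    case/or3P: (strongP Mst Qmod).
    + by move/eqP/setP/(_ a); rewrite in_setI in_set0 in_setU in_setC aM aD.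
    + move=> sub; apply/subsetP => m mM; move: (subsetP sub m mM).
      by rewrite in_setU in_setC mM.
    + move=> sub; move: MT; rewrite -subTset; case/negP; apply/subsetP => z _.
      case zM: (z \in M) => //; move: (subsetP sub z); rewrite in_setU in_setC zM /=; by move=> /(_ isT).
  have E := msm_max Mm Dst DT MD.
  have ab : connect ninc a b by rewrite -E in bM; apply: Dc.
  pose P := [set z | lt z y].
  have aP : a \in P by rewrite inE.
  have bP : b \notin P by rewrite inE; apply/negP => hb; move: (irr b); rewrite (trans hb yb).
  have [c [w [cP wP ncw' cc]]] := cross_conn ab aP bP.
  have ncw := (andP ncw').2.
  have wM : w \in M.
    by rewrite -E inE (connect_trans cc) // connect1.
  have := module_uni Mmod yM aM wM (ltW' ay).
  case/orP => h; last by move: wP; rewrite inE h.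
  by move: ncw cP; rewrite inE /Defs.comparable => ncw cP; rewrite (trans cP h) in ncw.
Qed.


Lemma msm_disj A B x : A \in msm lt -> B \in msm lt -> A != B -> x \in A -> x \notin B.
Proof.
move=> Am Bm AB xA; apply/negP => xB.
case/or3P: (strongP (msm_strong Am) (msm_module Bm)).
- by move/eqP/setP/(_ x); rewrite inE xA xB in_set0.
- move=> sub; have := msm_max Am (msm_strong Bm) (msm_neqT Bm) sub.
  by move=> E; move: AB; rewrite E eqxx.
- move=> sub; have := msm_max Bm (msm_strong Am) (msm_neqT Am) sub.
  by move=> E; move: AB; rewrite E eqxx.
Qed.

Lemma msm_unif A B x z x' z' : A \in msm lt -> B \in msm lt -> A != B ->
  x \in A -> z \in B -> x' \in A -> z' \in B -> lt x z -> lt x' z'.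
Proof.
move=> Am Bm AB xA zB x'A z'B xz.
have zA : z \notin A by apply: (msm_disj Bm Am); rewrite // eq_sym.
have x'B : x' \notin B by apply: (msm_disj Am Bm).
have x'z : lt x' z.
  have := module_uni (msm_module Am) zA xA x'A (ltW' xz).
  case/orP => // h; case: (no_split Am zA xA x'A xz h).
have := module_uni (msm_module Bm) x'B zB z'B (ltW x'z).
case/orP => // h; case: (no_split Bm x'B z'B zB h x'z).
Qed.

Lemma msm_side M : M \in msm lt -> exists y, y \notin M /\
  ((forall m, m \in M -> lt m y) \/ (forall m, m \in M -> lt y m)).
Proof.
move=> Mm; have Mmod := msm_module Mm.
have [m mM] := module_n0 Mmod.
have [z zM] : exists z, z \notin M.
  apply/existsP; move: (msm_neqT Mm); apply: contraR; rewrite negb_exists => /forallP H.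
  by apply/eqP/setP => z; move: (H z); rewrite negbK inE.
have [a [y [aM yM cay _]]] := cross_conn (conn m z) mM zM.
exists y; split => //.
have cy : forall m', m' \in M -> cmp y m'.
  by move=> m' m'M; apply: (module_uni Mmod yM aM m'M); rewrite cmpC.
case/orP: (cy a aM) => h.
  right=> m' m'M; case/orP: (cy m' m'M) => // h'; case: (no_split Mm yM m'M aM h' h).
left=> m' m'M; case/orP: (cy m' m'M) => // h'; case: (no_split Mm yM aM m'M h h').
Qed.

Lemma single_strong x : strong_module lt [set x].
Proof.
have mod : is_module lt [set x].
  apply: moduleP; first by apply/set0Pn; exists x; rewrite inE.
  by move=> y m1 m2 _; rewrite !inE => /eqP -> /eqP ->.
rewrite /strong_module mod /=; apply/forallP => Q; apply/implyP => _.
case xQ: (x \in Q).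
  by rewrite sub1set xQ orbT.
apply/orP; left; apply/eqP/setP => z; rewrite !inE.
by case: eqP => // ->; rewrite xQ.
Qed.

Lemma msm_cover x : [set x] != setT -> exists A, A \in msm lt /\ x \in A.
Proof.
move=> xT.
pose P := [pred M : {set X} | [&& strong_module lt M, M != setT & x \in M]].
have P1 : P [set x] by rewrite /= single_strong xT set11.
case: (arg_maxnP (fun M : {set X} => #|M|) P1) => M /and3P [Ms MT xM] Mmax.
exists M; split => //; rewrite inE /max_strong_module Ms MT /=.
apply/forallP => M'; apply/implyP => /andP [/andP [M's M'T] sub].
have : P M' by rewrite /= M's M'T (subsetP sub).
move/Mmax => le; rewrite eq_sym eqEcard sub; exact: le.
Qed.

End Modules.


Lemma seq_cross (T : eqType) (e : rel T) (P : pred T) w t a b :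
  symmetric e -> path e w t -> a \in w :: t -> b \in w :: t -> P a -> ~~ P b ->
  exists u v, [/\ u \in w :: t, v \in w :: t, e u v, P u & ~~ P v].
Proof.
move=> sym.
have H : forall (Q : pred T) w t b, path e w t -> b \in w :: t -> Q w -> ~~ Q b ->
    exists u v, [/\ u \in w :: t, v \in w :: t, e u v, Q u & ~~ Q v].
  move=> Q {}w {}t {}b; elim: t w => [|w' t IH] w /=.
    by move=> _; rewrite inE => /eqP -> ->.
  case/andP => ew pt; rewrite in_cons => bin Qw nQb.
  case Qw': (Q w').
    have bin' : b \in w' :: t by case/orP: bin => // /eqP E; rewrite E Qw in nQb.
    have [u [v [uin vin euv Qu nQv]]] := IH w' pt bin' Qw' nQb.
    by exists u, v; split => //; rewrite in_cons ?uin ?vin ?orbT.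
  by exists w, w'; rewrite !in_cons !eqxx Qw' ?orbT.
move=> pt ain bin Pa nPb.
case Pw: (P w).
  exact: (H P w t b pt bin Pw nPb).
have [u [v [uin vin euv Qu nQv]]] := H (predC P) w t a pt ain (negbT Pw) (ltac:(by rewrite /= Pa)).
exists v, u; split => //; try by rewrite sym.
by move: nQv => /=; rewrite negbK.
Qed.

Definition ilt (T : Type) (l r : T -> nat) (x y : T) : bool :=
  [&& l y <= l x, r x <= r y & ~~ ((l x <= l y) && (r y <= r x))].
Definition IRon (T : finType) (lt : rel T) (M : {set T}) (l r : T -> nat) : Prop :=
  (forall x, x \in M -> l x <= r x) /\
  (forall x y, x \in M -> y \in M -> lt x y = ilt l r x y).

Section Tree.
Variables (V : finType) (e : rel V).
Hypothesis tree : is_tree e.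

Lemma tsym : symmetric e. Proof. by case: tree. Qed.
Lemma tirr : irreflexive e. Proof. by case: tree. Qed.
Lemma tconn u v : connect e u v. Proof. by case: tree => _ _ H _; apply: H. Qed.
Lemma tacyc c : uniq c -> 3 <= size c -> ~~ cycle e c.
Proof. by case: tree => _ _ _ H; apply: H. Qed.

Lemma adj_index q u v : sorted e q -> uniq q -> u \in q -> v \in q -> e u v ->
  index v q = (index u q).+1 \/ index u q = (index v q).+1.
Proof.
have key : forall u v, u \in q -> v \in q -> e u v -> sorted e q -> uniq q ->
    index u q + 2 <= index v q -> False.
  move=> {}u {}v uq vq euv sq uqq lt2.
  set i := index u q in lt2; set k := index v q in lt2.
  have kq : k < size q by rewrite index_mem.
  pose c := drop i (take k.+1 q).
  have szc : size c = k.+1 - i.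
    by rewrite size_drop size_take; case: ifP => // /negbT; lia.
  have uc : uniq c by apply/drop_uniq/take_uniq.
  have c0 : nth u c 0 = u.
    rewrite nth_drop addn0 nth_take; first by rewrite nth_index.
    by rewrite /i; lia.
  have cl : last v c = v.
    rewrite -nth_last szc nth_drop nth_take; last by lia.
    have -> : i + (k.+1 - i).-1 = k by lia.
    by rewrite /k nth_index.
  have sc : sorted e c by apply/drop_sorted/take_sorted.
  have : cycle e c.
    rewrite (cycle_path v) cl.
    case: c c0 sc szc {uc cl} => [|x c'] /=; first by lia.
    by move=> -> ->; rewrite tsym euv.
  by apply/negP; apply: tacyc => //; rewrite szc; lia.
move=> sq uqq uq vq euv.
have uv : u != v by apply: contraFneq (tirr u) => E; rewrite {2}E.
have iuv : index u q != index v q.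
  by apply: contra uv => /eqP E; rewrite -(nth_index u uq) E nth_index.
case: (ltngtP (index u q).+1 (index v q)) => h.
- exfalso; apply: (key u v uq vq euv sq uqq); by rewrite addn2.
- case: (ltngtP (index v q).+1 (index u q)) => h'; last by right.
    by exfalso; apply: (key v u vq uq _ sq uqq); [rewrite tsym | rewrite addn2].
  move: iuv h h'; move: (index u q) (index v q) => a b; lia.
- by left.
Qed.

Lemma contig q w t : sorted e q -> uniq q -> path e w t -> {subset w :: t <= q} ->
  exists lo hi, [/\ lo <= hi, hi < size q &
    forall z, (z \in w :: t) = (z \in q) && (lo <= index z q <= hi)].
Proof.
move=> sq uq pt sub.
pose P := fun n => (n < size q) && (nth w q n \in w :: t).
have exP : exists n, P n.
  by exists (index w q); rewrite /P index_mem sub ?nth_index ?sub ?inE ?eqxx.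
have ubP : forall n, P n -> n <= size q by move=> n /andP [] /ltnW.
have convex : forall i j k, P i -> P k -> i <= j <= k -> P j.
  move=> i j k Pi Pk /andP [ij jk].
  have [ji|ij'] := leqP j i; first by have -> : j = i by lia.
  have [kj|jk'] := leqP k j; first by have -> : j = k by lia.
  move: Pi Pk => /andP [iq ip] /andP [kq kp].
  rewrite /P (leq_ltn_trans jk kq) /=.
  apply/negPn/negP => jn.
  pose Q := fun z => index z q < j.
  have Qi : Q (nth w q i) by rewrite /Q index_uniq.
  have Qk : ~~ Q (nth w q k) by rewrite /Q index_uniq // -leqNgt; lia.
  have [u [v [uin vin euv Qu nQv]]] := seq_cross (P:=Q) tsym pt ip kp Qi Qk.
  have vj : index v q != j.
    by apply: contraNneq jn => <-; rewrite nth_index ?sub.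
  move: Qu nQv; rewrite /Q -leqNgt => Qu nQv.
  case: (adj_index sq uq (sub _ uin) (sub _ vin) euv);
    move: vj Qu nQv; move: (index u q) (index v q) => a b; lia.
case: (ex_minnP exP) => lo Plo lomin.
case: (ex_maxnP exP ubP) => hi Phi himax.
exists lo, hi; split.
- by apply: himax.
- by case/andP: Phi.
- move=> z; apply/idP/idP.
    move=> zin; have zq := sub _ zin; rewrite zq /=.
    have Pz : P (index z q) by rewrite /P index_mem zq nth_index.
    by rewrite (lomin _ Pz) (himax _ Pz).
  case/andP => zq rng.
  have := convex _ _ _ Plo Phi rng.
  by case/andP => _; rewrite nth_index.
Qed.


Lemma int_sub (A B : {set V}) q la ra lb rb : la <= ra -> ra < size q -> uniq q ->
  (forall z, (z \in A) = (z \in q) && (la <= index z q <= ra)) ->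
  (forall z, (z \in B) = (z \in q) && (lb <= index z q <= rb)) ->
  (A \subset B) = (lb <= la) && (ra <= rb).
Proof.
move=> lara raq uq HA HB.
case: q raq uq HA HB => [|d q'] // raq uq HA HB.
apply/subsetP/andP.
- move=> sub.
  have z1A : nth d (d :: q') la \in A.
    by rewrite HA mem_nth ?index_uniq //; lia.
  have z2A : nth d (d :: q') ra \in A.
    by rewrite HA mem_nth ?index_uniq //; lia.
  have i1 : index (nth d (d :: q') la) (d :: q') = la by rewrite index_uniq //; lia.
  have i2 : index (nth d (d :: q') ra) (d :: q') = ra by rewrite index_uniq //; lia.
  move: (sub _ z1A) (sub _ z2A); rewrite !HB i1 i2 => /andP [_ h1] /andP [_ h2].
  by split; lia.
- move=> [h1 h2] z; rewrite HA HB => /andP [-> h]; lia.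
Qed.

Lemma tree_IRon (X : finType) (M : {set X}) (W : X -> {set V}) q :
  sorted e q -> uniq q ->
  (forall x, x \in M -> is_graph_path e (W x) /\ W x \subset [set z in q]) ->
  exists l r : X -> nat, IRon (fun x y => W x \proper W y) M l r.
Proof.
move=> sq uq H.
have : forall x, exists lr : nat * nat, x \in M ->
   [/\ lr.1 <= lr.2, lr.2 < size q &
     forall z, (z \in W x) = (z \in q) && (lr.1 <= index z q <= lr.2)].
  move=> x; case xM: (x \in M); last by exists (0, 0).
  have [[v [s [ps us Wx]]] sub] := H x xM.
  have sub' : {subset v :: s <= q}.
    by move=> z zin; have := subsetP sub z; rewrite Wx inE => /(_ zin); rewrite inE.
  have [lo [hi [lh hq Hz]]] := contig sq uq ps sub'.
  by exists (lo, hi) => _; split => // z; rewrite Wx inE Hz.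
case/fin_all_exists => lr Hlr.
exists (fun x => (lr x).1), (fun x => (lr x).2); split.
  by move=> x xM; case: (Hlr x xM).
move=> x y xM yM.
have [lx rx Hx] := Hlr x xM; have [ly ry Hy] := Hlr y yM.
rewrite properE (int_sub lx rx uq Hx Hy) (int_sub ly ry uq Hy Hx) /ilt.
by rewrite andbA.
Qed.

Lemma ham : (forall v, #|[set w | e v w]| <= 2) -> forall v0 : V,
  exists q, [/\ sorted e q, uniq q & forall z, z \in q].
Proof.
move=> deg v0.
suff : forall k q, sorted e q -> uniq q -> q != [::] -> #|V| - size q <= k ->
   exists q, [/\ sorted e q, uniq q & forall z, z \in q].
  by move=> /(_ #|V| [:: v0]); apply => //; lia.
elim=> [|k IH] q sq uq qn kq.
- exists q; split => // z; apply/negPn/negP => zq.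
  have : #|q| < #|V|.
    by apply: proper_card; apply/properP; split; [apply/subsetP | exists z].
  by move/card_uniqP: uq => ->; lia.
- case: (boolP [forall z, z \in q]) => [/forallP|]; first by exists q.
  rewrite negb_forall => /existsP [w wq].
  case: q sq uq qn kq wq => [|h s] // sq uq _ kq wq.
  have [a [b [aq bq eab _]]] := cross_conn (S := [set z in h :: s]) (tconn h w)
    (ltac:(by rewrite inE mem_head)) (ltac:(by rewrite inE)).
  rewrite !in_set in aq bq.
  have szb : size (h :: s) < #|V|.
    have : uniq (b :: h :: s) by rewrite cons_uniq bq uq.
    move/card_uniqP => E; have := max_card (mem (b :: h :: s)); rewrite E /=; lia.
  set q := h :: s in sq uq kq wq aq bq szb *.
  set i := index a q.
  have iq : i < size q by rewrite index_mem.
  have nia : nth h q i = a by rewrite nth_index.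
  case: (posnP i) => [i0|ip].
    have ha : h = a by rewrite -nia i0.
    apply: (IH (b :: q)).
    - by rewrite /q /=; rewrite /= in sq; rewrite sq andbT ha tsym eab.
    - by rewrite cons_uniq bq uq.
    - by [].
    - by rewrite /q /= in kq *; lia.
  case: (ltnP i.+1 (size q)) => [ilast|ilast].
    have e1 : e a (nth h q i.+1).
      by rewrite -nia; apply: (sortedP h sq).
    have e2 : e a (nth h q i.-1).
      rewrite tsym -nia; have -> : i = i.-1.+1 by lia.
      by apply: (sortedP h sq); lia.
    exfalso; move: (deg a); rewrite leqNgt => /negP; apply; apply/card_gt2P.
    exists (nth h q i.+1), (nth h q i.-1), b; split; first by rewrite !inE e1 e2 eab.
    have im : i.-1 < size q by lia.
    split.
    + rewrite (nth_uniq h ilast im uq); lia.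
    + by apply: contraNneq bq => <-; rewrite mem_nth.
    + by apply: contraNneq bq => ->; rewrite mem_nth.
  apply: (IH (rcons q b)).
  - rewrite /q /= rcons_path; rewrite /= in sq; rewrite sq /=.
    have : last h s = a.
      rewrite -nia (_ : last h s = last h (h :: s)) // -nth_last.
      have -> : i = size s by rewrite /q /= in iq ilast; lia.
      by [].
    by move=> ->.
  - by rewrite rcons_uniq bq uq.
  - by rewrite -size_eq0 size_rcons.
  - rewrite size_rcons; lia.
Qed.

End Tree.


Lemma lexle a b c d K : b < K -> d < K ->
  (a * K + b <= c * K + d) = (a < c) || ((a == c) && (b <= d)).
Proof. move=> hb hd; apply/idP/idP; nia. Qed.

Section PathGraph.
Variable n : nat.
Definition pe : rel 'I_n.+1 := fun i j => (i.+1 == j :> nat) || (j.+1 == i :> nat).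

Lemma pe_sym : symmetric pe. Proof. by move=> i j; rewrite /pe orbC. Qed.
Lemma pe_irr : irreflexive pe. Proof. by move=> i; rewrite /pe; lia. Qed.

Lemma pe_conn : forall i j, connect pe i j.
Proof.
have H : forall k (i j : 'I_n.+1), j = i + k :> nat -> connect pe i j.
  elim=> [|k IH] i j E.
    by have -> : j = i by apply/val_inj; rewrite /= E addn0.
  have jn := ltn_ord j.
  have mk : i + k < n.+1 by lia.
  apply: (connect_trans (IH i (inord (i + k)) _)); first by rewrite inordK.
  by apply: connect1; rewrite /pe inordK //; lia.
move=> i j; case: (leqP i j) => h.
  by apply: (H (j - i)); lia.
rewrite (sym_connect_sym pe_sym); apply: (H (i - j)); lia.
Qed.

Lemma seq_max (c : seq 'I_n.+1) : c != [::] -> exists2 m, m \in c & forall x, x \in c -> x <= m.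
Proof.
elim: c => [|x c IH] // _.
case: (eqVneq c [::]) => [->|cn].
  by exists x; rewrite ?inE // => y; rewrite inE => /eqP ->.
have [m mc mmax] := IH cn.
case: (leqP x m) => h.
  by exists m; rewrite ?inE ?mc ?orbT // => y; rewrite inE => /orP [/eqP ->|/mmax].
exists x; rewrite ?inE ?eqxx // => y; rewrite inE => /orP [/eqP ->//|/mmax]; lia.
Qed.

Lemma pe_acyc c : uniq c -> 3 <= size c -> ~~ cycle pe c.
Proof.
move=> uc sc; apply/negP => cc.
have cn : c != [::] by case: c uc sc cc.
have [m mc mmax] := seq_max cn.
case: (rot_to mc) => i s' E.
have : cycle pe (m :: s') by rewrite -E rot_cycle.
have : uniq (m :: s') by rewrite -E rot_uniq.
have sc' : 2 < size (m :: s') by rewrite -E size_rot.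
have memc z : z \in m :: s' -> z <= m by rewrite -E mem_rot => /mmax.
case: s' E memc sc' => [|a [|b t]] E memc //= _.
case/and4P => _ at' _ _.
case/and3P => ema _; rewrite rcons_path => /andP [_ ezm].
have am : a <= m by apply: memc; rewrite !inE eqxx orbT.
set z := last b t in ezm.
have zin : z \in b :: t by apply: mem_last.
have zm : z <= m by apply: memc; rewrite in_cons; apply/orP; right; rewrite in_cons zin orbT.
have az : a = z.
  apply: ord_inj; move: ema ezm; rewrite /pe; lia.
by move: at'; rewrite az zin.
Qed.

Lemma pe_deg v : #|[set w | pe v w]| <= 2.
Proof.
rewrite leqNgt; apply/negP => /card_gt2P [x [y [z [[]]]]].
rewrite !inE -!val_eqE /pe /= => hx hy hz [] ; lia.
Qed.

Lemma pe_tree : is_tree pe.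
Proof. split; [exact: pe_sym|exact: pe_irr|exact: pe_conn|exact: pe_acyc]. Qed.

Lemma pe_path a k : a + k <= n -> path pe (inord a) [seq inord j | j <- iota a.+1 k].
Proof.
elim: k a => [|k IH] a h //=.
rewrite IH ?andbT; last by lia.
by rewrite /pe !inordK //; lia.
Qed.

Definition iset (a b : nat) : {set 'I_n.+1} := [set i : 'I_n.+1 | a <= i <= b].

Lemma iset_path a b : a <= b <= n -> is_graph_path pe (iset a b).
Proof.
move=> /andP [ab bn].
exists (inord a), [seq inord j | j <- iota a.+1 (b - a)]; split.
- by apply: pe_path; lia.
- change (uniq [seq inord j : 'I_n.+1 | j <- iota a (b - a).+1]).
  rewrite map_inj_in_uniq ?iota_uniq //.
  move=> i j; rewrite !mem_iota => hi hj E.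
  by have := congr1 (@nat_of_ord _) E; rewrite !inordK //; lia.
- apply/setP => z; rewrite !inE.
  change ((a <= z <= b) = (z \in [seq inord j : 'I_n.+1 | j <- iota a (b - a).+1])).
  apply/idP/mapP.
    move=> h; exists (nat_of_ord z); first by rewrite mem_iota; lia.
    by apply: ord_inj; rewrite inordK.
  by move=> [k]; rewrite mem_iota => hk ->; rewrite inordK //; lia.
Qed.

Lemma iset_sub a b c d : a <= b <= n -> c <= d <= n ->
  (iset a b \subset iset c d) = (c <= a) && (b <= d).
Proof.
move=> h1 h2; apply/subsetP/andP.
- move=> sub.
  have ia : (inord a : 'I_n.+1) \in iset a b by rewrite inE inordK; lia.
  have ib : (inord b : 'I_n.+1) \in iset a b by rewrite inE inordK; lia.
  move: (sub _ ia) (sub _ ib); rewrite !inE !inordK; lia.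
- move=> [h3 h4] z; rewrite !inE; lia.
Qed.

End PathGraph.

Lemma IR_CI (T : finType) (lt : rel T) l r : IRon lt setT l r -> CI lt.
Proof.
move=> [lr H].
pose n := \max_(x : T) r x.
have rn x : r x <= n by apply: leq_bigmax.
exists 'I_n.+1, (@pe n), (fun x => iset n (l x) (r x)); split.
- exact: pe_tree.
- exact: pe_deg.
- split.
    by move=> x; apply: iset_path; rewrite lr ?in_setT ?rn.
  move=> x y; rewrite H ?in_setT // properE !iset_sub ?lr ?rn ?in_setT // /ilt.
  all: try by rewrite andbA.
Qed.

Lemma IR_dual (T : finType) (lt : rel T) M l r : IRon lt M l r ->
  exists l' r', IRon (dual_rel lt) M l' r'.
Proof.
move=> [lr H]; pose C := \max_(x : T) r x.
have rC x : r x <= C by apply: leq_bigmax.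
exists r, (fun x => l x + C); split.
  by move=> x _; have := rC x; lia.
move=> x y xM yM; rewrite /dual_rel H // /ilt; lia.
Qed.

Lemma IR_sub (T : finType) (lt : rel T) M l r : IRon lt M l r ->
  IRon (sub_rel lt M) setT (fun x => l (val x)) (fun x => r (val x)).
Proof.
move=> [lr H]; split; first by move=> x _; apply: lr; exact: (valP x).
by move=> x y _ _; rewrite /sub_rel H //; apply: valP.
Qed.

Lemma CI_IR (T : finType) (lt : rel T) : CI lt -> exists l r, IRon lt setT l r.
Proof.
move=> [V [e [W [tr deg [Wp Wlt]]]]].
case: (pickP (fun _ : T => true)) => [x0 _|T0]; last first.
  exists (fun _ => 0), (fun _ => 0); split => x; by have := T0 x.
have [v0 [s0 _]] := Wp x0.
have [q [sq uq allq]] := ham tr deg v0.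
have Wq : forall x, x \in [set: T] -> is_graph_path e (W x) /\ W x \subset [set z in q].
  by move=> x _; split => //; apply/subsetP => z _; rewrite inE allq.
have [l [r IR]] := tree_IRon tr sq uq Wq.
exists l, r; case: IR => [lr H]; split => // x y xT yT.
by rewrite Wlt H.
Qed.


Lemma lexlt a b c d K : b < K -> d < K ->
  (a * K + b < c * K + d) = (a < c) || ((a == c) && (b < d)).
Proof. move=> hb hd; rewrite ltnNge lexle //; lia. Qed.
Lemma lexeq a b c d K : b < K -> d < K ->
  (a * K + b == c * K + d) = (a == c) && (b == d).
Proof. move=> hb hd; rewrite eqn_leq !lexle //; lia. Qed.

Lemma IR_norm (T : finType) (lt : rel T) l r : IRon lt setT l r ->
  exists l' r', [/\ IRon lt setT l' r', injective l' & injective r'].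
Proof.
move=> [lr H].
pose B := (\max_(x : T) r x).+1.
have rB x : r x < B by rewrite ltnS; apply: leq_bigmax.
have lB x : l x < B by apply: leq_ltn_trans (rB x); apply: lr; rewrite in_setT.
pose K := #|T|.
pose idx (x : T) := nat_of_ord (enum_rank x).
have iK x : idx x < K by apply: ltn_ord.
have iinj x y : idx x = idx y -> x = y.
  by move=> E; apply: enum_rank_inj; apply: ord_inj.
pose l' x := (l x * B + (B.-1 - r x)) * K + idx x.
pose r' x := (r x * B + (B.-1 - l x)) * K + idx x.
exists l', r'; split.
- split.
    move=> x _; have := lr x (in_setT x); have := rB x; have := lB x; have := iK x.
    move=> h1 h2 h3 h4; rewrite /l' /r' lexle ?lexlt ?lexeq //; lia.
  move=> x y _ _; rewrite H ?in_setT //.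
  case: (eqVneq x y) => [<-|xy].
    by rewrite /ilt; lia.
  have ixy : idx x != idx y by apply: contra_neq xy; apply: iinj.
  have := rB x; have := rB y; have := lB x; have := lB y => h1 h2 h3 h4.
  have := iK x; have := iK y => h5 h6.
  rewrite /ilt /l' /r' !lexle ?lexlt ?lexeq //; lia.
- move=> x y; rewrite /l' => /eqP; rewrite lexeq // => /andP [_ /eqP]; exact: iinj.
- move=> x y; rewrite /r' => /eqP; rewrite lexeq // => /andP [_ /eqP]; exact: iinj.
Qed.

Lemma below_IR (T : finType) (lt : rel T) (M : {set T}) y : CPT lt ->
  (forall m, m \in M -> lt m y) -> exists l r, IRon lt M l r.
Proof.
move=> [V [e [W [tr [Wp Wlt]]]]] below.
have [v [s [ps us Wy]]] := Wp y.
have sq : sorted e (v :: s) by [].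
have Wq : forall x, x \in M -> is_graph_path e (W x) /\ W x \subset [set z in v :: s].
  move=> x xM; split => //; rewrite -Wy.
  by have := below x xM; rewrite Wlt => /proper_sub.
have [l [r [lr H]]] := tree_IRon tr sq us Wq.
by exists l, r; split => // x z xM zM; rewrite Wlt H.
Qed.

Lemma CPT_map (T Y : finType) (lt : rel T) (rel' : rel Y) (f : Y -> T) :
  CPT lt -> (forall a b, rel' a b = lt (f a) (f b)) -> CPT rel'.
Proof.
move=> [V [e [W [tr [Wp Wlt]]]]] H.
exists V, e, (fun a => W (f a)); split => //; split => // a b.
by rewrite H Wlt.
Qed.

Section Main.
Variables (X : finType) (lt : rel X).
Hypotheses (irr : irreflexive lt) (tr : transitive lt) (conn : comp_connected lt).
Hypotheses (cpt : CPT lt) (dcpt : CPT (dual_rel lt)).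

Lemma part2 M : M \in msm lt -> exists l r, IRon lt M l r.
Proof.
move=> Mm; have [y [yM [below|above]]] := msm_side irr tr conn Mm.
  exact: (below_IR cpt below).
have [l [r IR]] := below_IR (M := M) (y := y) dcpt above.
exact: (IR_dual IR).
Qed.

Local Notation qT := {M : {set X} | M \in msm lt}.

Lemma quot_any (A B : qT) x z : x \in val A -> z \in val B -> A != B ->
  quot_lt lt A B = lt x z.
Proof.
move=> xA zB AB.
have AB' : val A != val B by rewrite val_eqE.
apply/idP/idP.
  by move/forall_inP/(_ x xA)/forall_inP/(_ z zB).
move=> xz; apply/forall_inP => x' x'A; apply/forall_inP => z' z'B.
exact: (msm_unif irr tr conn (valP A) (valP B) AB' xA zB x'A z'B xz).
Qed.

Lemma quot_rep (rep : qT -> X) : (forall A, rep A \in val A) ->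
  forall A B, quot_lt lt A B = lt (rep A) (rep B).
Proof.
move=> repP A B; case: (eqVneq A B) => [<-|AB]; last exact: quot_any.
rewrite irr; apply/negP => /forall_inP /(_ _ (repP A)) /forall_inP /(_ _ (repP A)).
by rewrite irr.
Qed.

Lemma part1 : dually_CPT (quot_lt lt).
Proof.
have : forall A : qT, exists x, x \in val A.
  by move=> A; apply: module_n0; apply: (msm_module (valP A)).
case/fin_all_exists => rep repP.
split.
  by apply: (CPT_map (f := rep) cpt); apply: (quot_rep repP).
apply: (CPT_map (f := rep) dcpt) => A B.
by rewrite /dual_rel (quot_rep repP).
Qed.

Lemma part3 : CI (quot_lt lt) -> CI lt.
Proof.
move=> ciq.
have [/existsP [x /eqP xT]|nT] := boolP [exists x : X, [set x] == [set: X]].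
  apply: (IR_CI (l := fun _ => 0) (r := fun _ => 0)); split => // a b _ _.
  have ax : a = x by apply/set1P; rewrite xT.
  have bx : b = x by apply/set1P; rewrite xT.
  by rewrite ax bx irr.
have : forall x, exists A : qT, x \in val A.
  move=> x; have xT : [set x] != setT by move: nT; rewrite negb_exists => /forallP.
  have [A [Am xA]] := msm_cover lt xT.
  by exists (exist _ A Am).
case/fin_all_exists => f fP.
have : forall A : qT, exists lr : (X -> nat) * (X -> nat), IRon lt (val A) lr.1 lr.2.
  move=> A; have [l [r IR]] := part2 (valP A).
  by exists (l, r).
case/fin_all_exists => g gP.
have [lq0 [rq0 IRq0]] := CI_IR ciq.
have [Lq [Rq [[LRq Hq] Linj Rinj]]] := IR_norm IRq0.
pose S := (\max_(A : qT) \max_(x : X) ((g A).1 x + (g A).2 x)).+1.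
have gS A x : (g A).1 x + (g A).2 x < S.
  rewrite ltnS; apply: leq_trans (leq_bigmax A).
  exact: (leq_bigmax (F := fun x => (g A).1 x + (g A).2 x) x).
pose l x := Lq (f x) * S + (g (f x)).1 x.
pose r x := Rq (f x) * S + (g (f x)).2 x.
apply: (IR_CI (l := l) (r := r)); split.
  move=> x _; have := gS (f x) x; have := LRq (f x) (in_setT _).
  have := (gP (f x)).1 x (fP x) => h1 h2 h3.
  rewrite /l /r lexle //; lia.
move=> x z _ _.
have := gS (f x) x; have := gS (f z) z => h1 h2.
case: (eqVneq (f x) (f z)) => [E|ne].
  have xA := fP x; have zA := fP z; rewrite E in xA h2 *.
  rewrite ((gP (f z)).2 x z xA zA) /ilt /l /r E !lexle //; lia.
have LL : Lq (f x) != Lq (f z) by apply: contra_neq ne; apply: Linj.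
have RR : Rq (f x) != Rq (f z) by apply: contra_neq ne; apply: Rinj.
rewrite -(quot_any (fP x) (fP z) ne) Hq ?in_setT //.
rewrite /ilt /l /r !lexle //; lia.
Qed.

End Main.

Theorem mainTheorem2 (X : finType) (lt : rel X) :
  is_poset lt -> dually_CPT lt -> comp_connected lt ->
  [/\ dually_CPT (quot_lt lt),
      (forall M : {set X}, M \in msm lt -> CI (sub_rel lt M)) &
      (CI (quot_lt lt) -> CI lt)].
Proof.
move=> [irr tr] [cpt dcpt] conn; split.
- exact: part1.
- move=> M Mm; have [l [r IR]] := part2 irr tr conn cpt dcpt Mm.
  exact: (IR_CI (IR_sub IR)).
- exact: part3.
Qed.
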